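(* Let $G$ be a unicyclic graph of order $n$ with girth $g$ (so $3\le g\le n$). Then $$SO(G)\le 2\sqrt{(n-g+2)^2+4}+(n-g)\sqrt{(n-g+2)^2+1}+2\sqrt2\,(g-2),$$ with equality if and only if $G$ is isomorphic to the graph $U_{n,g}$ obtained by attaching $n-g$ pendent edges to one vertex of the cycle $C_g$.
   Context: For a graph $G$, $d_G(w)$ denotes the degree of vertex $w$, and the Sombor index is $SO(G)=\sum_{ab\in E(G)}\sqrt{d_G(a)^2+d_G(b)^2}$. A unicyclic graph is a connected graph with exactly one cycle; its girth is the length of that cycle. $C_g$ is the cycle on $g$ vertices. *)

(* Defs.v *)
From HB Require Import structures.
From mathcomp Require Import all_boot all_order all_algebra.
From mathcomp Require Import reals.
Set Implicit Arguments. Unset Strict Implicit. Unset Printing Implicit Defensive.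
Import Order.TTheory GRing.Theory Num.Theory.

(* A simple graph: vertex type T (finite) and adjacency relation e,
   assumed symmetric and irreflexive in the theorem. *)

Local Open Scope ring_scope.

Definition deg (T : finType) (e : rel T) (x : T) : nat := #|[set y | e x y]|%N.

(* Sombor index: sum over unordered edges {a,b} of sqrt(d(a)^2+d(b)^2);
   each unordered edge is counted twice in the ordered double sum, hence / 2. *)
Definition sombor (R : realType) (T : finType) (e : rel T) : R :=
  (\sum_(x : T) \sum_(y : T | e x y)
      Num.sqrt (((deg e x)%:R : R) ^+ 2 + ((deg e y)%:R : R) ^+ 2)) / 2.

Definition connectedg (T : finType) (e : rel T) : Prop :=
  forall x y : T, connect e x y.

Definition is_graph_cycle (T : finType) (e : rel T) (c : seq T) : Prop :=
  ucycle e c /\ (3 <= size c)%N.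

Definition cycle_edges (T : finType) (c : seq T) : {set {set T}} :=
  [set [set x; next c x] | x in c].

Definition unicyclic_with_cycle (T : finType) (e : rel T) (c : seq T) : Prop :=
  [/\ connectedg e, is_graph_cycle e c &
      forall c', is_graph_cycle e c' -> cycle_edges c' = cycle_edges c].

(* U_{n,g} on vertex set 'I_n: vertices 0..g-1 form the cycle C_g
   (i ~ i+1 mod g), and vertices g..n-1 are pendent vertices attached to 0. *)
Definition Urel (n g : nat) : rel 'I_n := fun i j =>
  [|| [&& (i < g)%N, (j < g)%N &
          (val j == (val i).+1 %% g)%N || (val i == (val j).+1 %% g)%N],
      (val i == 0%N) && (g <= j)%N | (val j == 0%N) && (g <= i)%N].

Definition graph_iso (T1 T2 : finType) (e1 : rel T1) (e2 : rel T2) : Prop :=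
  exists f : T1 -> T2, bijective f /\ forall x y, e2 (f x) (f y) = e1 x y.

Definition sombor_bound (R : realType) (n g : nat) : R :=
  2 * Num.sqrt (((n - g + 2)%N%:R : R) ^+ 2 + 4)
  + (n - g)%N%:R * Num.sqrt (((n - g + 2)%N%:R : R) ^+ 2 + 1)
  + 2 * Num.sqrt 2 * ((g%:R : R) - 2).

Arguments Urel n g : clear implicits.
Arguments sombor_bound R n g : clear implicits.
Arguments sombor R [T] e.

(* Main.v *)
Require Import Defs.
From HB Require Import structures.
From mathcomp Require Import all_boot all_order all_algebra.
From mathcomp Require Import reals ring lra zify.
Import Order.TTheory GRing.Theory Num.Theory.

Set Implicit Arguments. Unset Strict Implicit. Unset Printing Implicit Defensive.

Section RealLemmas.
Variable R : rcfType.
Local Open Scope ring_scope.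

Lemma sqrt_le_sum (A B C D : R) : 0 <= A -> 0 <= B -> 0 <= C -> 0 <= D ->
  A + B <= C + D -> A * B <= C * D ->
  Num.sqrt A + Num.sqrt B <= Num.sqrt C + Num.sqrt D.
Proof.
move=> hA hB hC hD hs hp.
have ha := sqrtr_ge0 A; have hb := sqrtr_ge0 B.
have hc := sqrtr_ge0 C; have hd := sqrtr_ge0 D.
have sa := sqr_sqrtr hA; have sb := sqr_sqrtr hB.
have sc := sqr_sqrtr hC; have sd := sqr_sqrtr hD.
have hab : Num.sqrt A * Num.sqrt B <= Num.sqrt C * Num.sqrt D.
  rewrite -!sqrtrM //; rewrite ler_sqrt //; exact: mulr_ge0.
set a := Num.sqrt A in ha sa hab *; set b := Num.sqrt B in hb sb hab *.
set c := Num.sqrt C in hc sc hab *; set d := Num.sqrt D in hd sd hab *.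
rewrite -sa -sb -sc -sd in hs.
nra.
Qed.

Definition psi (x : R) := Num.sqrt (x ^+ 2 + 4).

Lemma psi_conv (m : R) : 0 <= m -> 2 * psi (m + 1) <= psi m + psi (m + 2).
Proof.
move=> hm; rewrite /psi.
have h1 : 0 <= m ^+ 2 + 4 by nra.
have h2 : 0 <= (m + 2) ^+ 2 + 4 by nra.
have h3 : 0 <= (m + 1) ^+ 2 + 4 by nra.
have huv : m ^+ 2 + 2 * m + 4 <= Num.sqrt (m ^+ 2 + 4) * Num.sqrt ((m + 2) ^+ 2 + 4).
  rewrite -sqrtrM //.
  have e : m ^+ 2 + 2 * m + 4 = Num.sqrt ((m ^+ 2 + 2 * m + 4) ^+ 2).
    by rewrite sqrtr_sqr ger0_norm //; nra.
  rewrite [X in X <= _]e ler_sqrt; last by nra.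
  nra.
have := sqr_sqrtr h1; have := sqr_sqrtr h2; have := sqr_sqrtr h3.
have := sqrtr_ge0 (m ^+ 2 + 4); have := sqrtr_ge0 ((m + 2) ^+ 2 + 4).
have := sqrtr_ge0 ((m + 1) ^+ 2 + 4).
move: huv.
set u := Num.sqrt (m ^+ 2 + 4); set v := Num.sqrt ((m + 2) ^+ 2 + 4).
set w := Num.sqrt ((m + 1) ^+ 2 + 4).
move=> *; nra.
Qed.

Lemma delta_mono (x : R) (n : nat) : 0 <= x ->
  psi (x + 1) - psi x <= psi (x + n%:R + 1) - psi (x + n%:R).
Proof.
move=> hx; elim: n => [|n IH]; first by rewrite addr0.
apply: (le_trans IH).
have h := @psi_conv _ (addr_ge0 hx (ler0n _ n)).
have e1 : x + n.+1%:R = x + n%:R + 1 by rewrite -addn1 natrD addrA.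
have e2 : x + n.+1%:R + 1 = x + n%:R + 2 by rewrite e1 -addrA.
rewrite e2 e1; lra.
Qed.

Definition phi (a : nat) := psi (2 + a%:R) - psi 2.

Lemma phi0 : phi 0 = 0.
Proof. by rewrite /phi addr0 subrr. Qed.

Lemma phi_super (a b : nat) : phi a + phi b <= phi (a + b).
Proof.
elim: b => [|b IH]; first by rewrite phi0 addr0 addn0.
have hx : 0 <= 2 + b%:R :> R by apply: addr_ge0.
have h := @delta_mono (2 + b%:R) a hx.
have e1 : phi b.+1 = phi b + (psi (2 + b%:R + 1) - psi (2 + b%:R)).
  rewrite /phi -[b.+1]addn1 natrD addrA; lra.
have e2 : phi (a + b.+1) = phi (a + b) +
   (psi (2 + b%:R + a%:R + 1) - psi (2 + b%:R + a%:R)).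
  rewrite /phi addnS -[(a + b).+1]addn1 !natrD.
  have -> : 2 + (a%:R + b%:R + 1) = 2 + b%:R + a%:R + 1 :> R by ring.
  have -> : 2 + (a%:R + b%:R) = 2 + b%:R + a%:R :> R by ring.
  lra.
rewrite e1 e2; lra.
Qed.

Lemma phi_mono (a b : nat) : (a <= b)%N -> phi a <= phi b.
Proof.
move=> hab; rewrite /phi lerD2r /psi ler_sqrt; last first.
  by apply: addr_ge0 => //; apply: sqr_ge0.
rewrite lerD2r ler_sqr ?lerD2l ?ler_nat //; apply: addr_ge0 => //.
Qed.

Lemma phi_sum (I : Type) (s : seq I) (t : I -> nat) :
  \sum_(x <- s) phi (t x) <= phi (\sum_(x <- s) t x)%N.
Proof.
elim: s => [|x s IH]; first by rewrite !big_nil phi0.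
rewrite !big_cons; apply: le_trans (phi_super _ _); lra.
Qed.
End RealLemmas.

Lemma card_ord_pred n (P : pred nat) : #|[set j : 'I_n | P j]| = count P (iota 0 n).
Proof.
rewrite cardsE cardE /enum_mem size_filter -enumT -val_enum_ord count_map.
by [].
Qed.
Lemma count12 g : 3 <= g -> count (fun m => (m == 1) || (m == g.-1)) (iota 0 g) = 2.
Proof.
move=> hg.
have h := count_predUI (pred1 1) (pred1 g.-1) (iota 0 g).
rewrite !count_uniq_mem ?iota_uniq // !mem_iota /= add0n in h.
have h0 : count (predI (pred1 1) (pred1 g.-1)) (iota 0 g) = 0.
  rewrite (eq_count (a2 := pred0)) ?count_pred0 // => m /=.
  apply/andP => [[/eqP -> /eqP h1]]; lia.
have h1 : 1 < g by lia.
have h2 : g.-1 < g by lia.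
rewrite h0 addn0 h1 h2 in h.
rewrite -[2]/(true + true) -h; by apply: eq_count.
Qed.

Lemma urel_deg0 n g (z : 'I_n) : val z = 0 -> 3 <= g -> g <= n ->
  #|[set j | Urel n g z j]| = n - g + 2.
Proof.
move=> hz hg hgn.
have -> : #|[set j | Urel n g z j]| = #|[set j : 'I_n | 
   (((val j == 1) || (val j == g.-1)) && (val j < g)) || (g <= val j)]|.
  have hz' : nat_of_ord z = 0 := hz.
  have g0 : 0 < g by lia.
  apply: eq_card => j; rewrite !inE /Urel hz hz' /= g0 /=.
  rewrite (modn_small (m := 1)); last by lia.
  case: (ltnP j g) => hj /=.
    have -> : (0 == j.+1 %% g) = (val j == g.-1).
      apply/eqP/eqP.
        move=> hm; move: hj; rewrite leq_eqVlt => /orP [/eqP e1|lt]; first by rewrite -e1.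
        by rewrite modn_small in hm.
      move=> ->; rewrite prednK ?modnn //; lia.
    have -> : (g <= 0) = false by lia.
    by rewrite andbF andbT !orbF.
  by rewrite !orbT.
rewrite (card_ord_pred n (fun m => ((m == 1) || (m == g.-1)) && (m < g) || (g <= m))).
rewrite -(subnKC hgn) iotaD count_cat add0n.
have -> : count (fun m => ((m == 1) || (m == g.-1)) && (m < g) || (g <= m)) (iota 0 g) = 2.
  rewrite -(@count12 g hg); apply: eq_in_count => m; rewrite mem_iota add0n => /andP [_ hm].
  by rewrite hm andbT (leqNgt g m) hm orbF.
have -> : count (fun m => ((m == 1) || (m == g.-1)) && (m < g) || (g <= m)) (iota g (n - g)) = n - g.
  rewrite -[RHS](size_iota g (n - g)) -count_predT; apply: eq_in_count => m.
  by rewrite mem_iota => /andP [hm _]; rewrite hm orbT.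
by rewrite addnC addKn -(subnKC hgn) addKn addnC.
Qed.

Section Graph.
Variable (T : finType) (e : rel T).
Hypothesis e_sym : symmetric e.
Hypothesis e_irr : irreflexive e.
Variable c : seq T.
Hypothesis hU : unicyclic_with_cycle e c.

Lemma c_uniq : uniq c.
Proof. by case: hU => _ [/andP[]]. Qed.
Lemma c_cycle : cycle e c.
Proof. by case: hU => _ [/andP[]]. Qed.
Lemma c_size : 3 <= size c.
Proof. by case: hU => _ []. Qed.
Lemma c_conn : connectedg e.
Proof. by case: hU. Qed.
Lemma c_unique c' : is_graph_cycle e c' -> cycle_edges c' = cycle_edges c.
Proof. by case: hU => _ _; apply. Qed.

Lemma e_neq x y : e x y -> x != y.
Proof. by apply: contraTneq => ->; rewrite e_irr. Qed.

Fixpoint reach (i : nat) (x : T) : bool :=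
  if i is j.+1 then reach j x || [exists y, e x y && reach j y] else x \in c.

Lemma c_ex : exists c0, c0 \in c.
Proof. by move: c_size; case: c => // a l _; exists a; rewrite mem_head. Qed.

Lemma reach_ex x : exists i, reach i x.
Proof.
have [c0 hc0] := c_ex.
have /connectP [p hp hl] := c_conn x c0.
elim: p x hp hl => [|z p IH] x /=; first by move=> _ hl; exists 0; rewrite /= -hl.
move=> /andP [exz hp] hl; have [i hi] := IH z hp hl.
exists i.+1 => /=; apply/orP; right; apply/existsP; exists z; by rewrite exz.
Qed.

Definition dist x := ex_minn (reach_ex x).

Lemma dist_reach x : reach (dist x) x.
Proof. by rewrite /dist; case: ex_minnP. Qed.

Lemma dist_min x i : reach i x -> dist x <= i.
Proof. by rewrite /dist; case: ex_minnP => m _ h /h. Qed.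

Lemma dist0 x : (dist x == 0) = (x \in c).
Proof.
apply/idP/idP => [/eqP h|h]; first by have := dist_reach x; rewrite h.
by rewrite -leqn0; apply: dist_min.
Qed.

Lemma dist_step x : x \notin c -> exists y, e x y && (dist y < dist x).
Proof.
move=> hx; have := dist_reach x; have : dist x != 0 by rewrite dist0.
case hdx: (dist x) => [|m] //= _.
case/orP => [h|]; first by have := dist_min h; rewrite hdx ltnn.
case/existsP => y /andP [exy hy]; exists y; rewrite exy /=.
by have := dist_min hy; rewrite ltnS.
Qed.

Definition par x := if x \in c then next c x
  else odflt x [pick y | e x y && (dist y < dist x)].

Lemma par_c x : x \in c -> par x = next c x.
Proof. by rewrite /par => ->. Qed.

Lemma par_in x : x \in c -> par x \in c.
Proof. by move=> h; rewrite par_c // mem_next. Qed.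

Lemma par_spec x : x \notin c -> e x (par x) && (dist (par x) < dist x).
Proof.
move=> hx; rewrite /par (negbTE hx).
case: pickP => [y //|h].
by have [y] := dist_step hx; rewrite h.
Qed.

Lemma par_edge x : e x (par x).
Proof.
case hx: (x \in c); first by rewrite par_c // next_cycle // c_cycle.
by case/andP: (par_spec (negbT hx)).
Qed.

Lemma par_lt x : x \notin c -> dist (par x) < dist x.
Proof. by move/par_spec/andP=> []. Qed.

Lemma down (r : rel T) : (forall x, x \notin c -> r x (par x)) ->
  forall x, exists2 s, s \in c & connect r x s.
Proof.
move=> hr; suff H : forall n x, dist x < n -> exists2 s, s \in c & connect r x s.
  by move=> x; apply: (H (dist x).+1).
elim=> [//|n IH] x hx.
case hxc: (x \in c); first by exists x => //; apply: connect0.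
have hlt := par_lt (negbT hxc).
have [s hs hcs] := IH (par x) (leq_trans hlt hx).
exists s => //; apply: connect_trans hcs; apply: connect1; by apply: hr; rewrite hxc.
Qed.

Lemma cyc_conn (r : rel T) : (forall a, a \in c -> r a (next c a)) ->
  forall s t, s \in c -> t \in c -> connect r s t.
Proof.
move=> hr s t hs ht.
have [i s' hrot] := rot_to hs.
have hu : uniq (s :: s') by rewrite -hrot rot_uniq c_uniq.
have hcy := cycle_next hu.
have hp : path (frel (next c)) s s'.
  have : path (frel (next (s :: s'))) s (rcons s' s) := hcy.
  rewrite rcons_path => /andP [hp _].
  apply: sub_path hp => a b /eqP <-; apply/eqP.
  by rewrite -hrot (next_rot i c_uniq).
have hp2 : path r s s'.
  apply: (@sub_in_path _ (mem c) (frel (next c))) hp.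
    by move=> a b ha _ /eqP <-; apply: hr.
  by apply/allP => z; rewrite -hrot mem_rot.
by apply: (path_connect hp2); rewrite -hrot mem_rot.
Qed.

Lemma next_last_u (u : T) (q : seq T) : uniq (u :: q) -> next (u :: q) (last u q) = u.
Proof.
move=> hu; rewrite next_nth mem_last index_last //.
by rewrite nth_default.
Qed.

Lemma K u v : e u v ->
  connect (fun a b => e a b && ([set a; b] != [set u; v])) u v ->
  [set u; v] \in cycle_edges c.
Proof.
set r := (fun a b => _) => euv /connectP [p hp hl].
have [q [hq huq hlq]] : exists q, [/\ path r u q, uniq (u :: q) & last u q = last u p].
  by case: (shortenP hp) => q hq huq _; exists q.
rewrite -hl in hlq.
have hq2 : 2 <= size q.
  case: q hq huq hlq => [|a [|b q]] //=.
    by move=> _ _ h; move: euv; rewrite -h e_irr.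
  by rewrite andbT /r => /andP [_]; move=> h _ ha; rewrite ha eqxx in h.
have hcy : is_graph_cycle e (u :: q).
  split; last by [].
  apply/andP; split=> //=.
  rewrite rcons_path; apply/andP; split.
    by apply: sub_path hq => a b /andP [].
  by rewrite hlq e_sym.
rewrite -(c_unique hcy); apply/imsetP; exists v; first by rewrite -hlq mem_last.
have -> : next (u :: q) v = u by rewrite -hlq next_last_u.
by rewrite setUC.
Qed.

Lemma edge_cases x y : e x y -> exists w, [set x; y] = [set w; par w].
Proof.
move=> exy.
case: (boolP [exists w, [set x; y] == [set w; par w]]) => [/existsP [w /eqP h]|hn].
  by exists w.
exfalso.
have hw : forall w, [set w; par w] != [set x; y].
  by move=> w; rewrite eq_sym; apply/negP => h; case/negP: hn; apply/existsP; exists w.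
set r := (fun a b => e a b && ([set a; b] != [set x; y])).
have hr : forall w, r w (par w) by move=> w; rewrite /r par_edge hw.
have hrs : symmetric r by move=> a b; rewrite /r e_sym setUC.
have [sx hsx hcx] := down (fun w _ => hr w) x.
have [sy hsy hcy] := down (fun w _ => hr w) y.
have hss : connect r sx sy by apply: cyc_conn => // a ha; rewrite -par_c.
have : connect r x y.
  apply: connect_trans hcx (connect_trans hss _).
  by rewrite (sym_connect_sym hrs).
move/(K exy)/imsetP => [w hwc hE].
by move: (hw w); rewrite par_c // hE eqxx.
Qed.

Lemma pair_eq (x y a b : T) : x != y -> [set x; y] = [set a; b] ->
  (a == x) && (b == y) || (a == y) && (b == x).
Proof.
move=> hxy E.
have hx : x \in [set a; b] by rewrite -E set21.
have hy : y \in [set a; b] by rewrite -E set22.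
move: hx hy; rewrite !inE.
case/orP=> /eqP hx; case/orP=> /eqP hy; subst.
- by rewrite eqxx in hxy.
- by rewrite !eqxx.
- by rewrite !eqxx orbT.
- by rewrite eqxx in hxy.
Qed.

Lemma e_par x y : e x y = (y == par x) || (x == par y).
Proof.
apply/idP/idP => [exy|].
  have [w hw] := edge_cases exy.
  case/orP: (pair_eq (e_neq exy) hw) => /andP [/eqP h1 /eqP h2]; subst.
    by rewrite eqxx.
  by rewrite eqxx orbT.
case/orP=> /eqP ->; first exact: par_edge.
by rewrite e_sym par_edge.
Qed.

Lemma nn x : x \in c -> next c (next c x) != x.
Proof.
move=> hx; have [i s' hrot] := rot_to hx.
have hu : uniq (x :: s') by rewrite -hrot rot_uniq c_uniq.
have hsz : 2 <= size s'.
  by move: c_size; rewrite -(size_rot i) hrot.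
rewrite -!(next_rot i c_uniq) hrot.
case: s' hu hsz {hrot} => [|a [|b r]] //= hu _.
move: hu; rewrite !inE !negb_or => /andP [/and3P [hxa hxb _] /andP [/andP [hab _] _]].
rewrite /next /= eqxx (eq_sym a) (negbTE hxa) eqxx.
by rewrite eq_sym.
Qed.

Lemma P3 x : par (par x) != x.
Proof.
case hx: (x \in c).
  by rewrite (par_c hx) par_c ?mem_next // nn.
have hlt := par_lt (negbT hx).
case hy: (par x \in c).
  by apply/eqP => h; move: (par_in hy); rewrite h hx.
have hlt2 := par_lt (negbT hy).
by apply/eqP => h; move: (ltn_trans hlt2 hlt); rewrite h ltnn.
Qed.

Definition ch x := [set y | par y == x].
Definition tc x := [set y | (y \notin c) && (par y == x)].
Definition NC := [set y | y \notin c].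
Definition kk := #|NC|.

Lemma deg_par x : deg e x = (#|ch x|).+1.
Proof.
rewrite /deg; have -> : [set y | e x y] = par x |: ch x.
  apply/setP => y; rewrite !inE e_par (eq_sym x).
  done.
rewrite cardsU1 inE P3 //.
Qed.

Lemma prev_eq x y : x \in c -> (par y == x) && (y \in c) = (y == prev c x).
Proof.
move=> hx; apply/idP/idP => [/andP [/eqP <- hy]|/eqP ->].
  by rewrite par_c // prev_next ?c_uniq.
by rewrite mem_prev hx par_c ?mem_prev // next_prev ?c_uniq // eqxx.
Qed.

Lemma deg_c x : x \in c -> deg e x = (#|tc x|).+2.
Proof.
move=> hx; rewrite deg_par.
have -> : ch x = prev c x |: tc x.
  apply/setP => y; rewrite !inE -(prev_eq y hx).
  by case: (y \in c); rewrite /= ?andbT ?andbF ?orbF.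
by rewrite (cardsU1 (prev c x) (tc x)) inE mem_prev hx.
Qed.

Lemma par_notin x y : par y = x -> x \notin c -> y \notin c.
Proof. by move=> <-; apply: contra; apply: par_in. Qed.

Lemma ch_notc x : x \notin c -> ch x \subset NC :\ x.
Proof.
move=> hx; apply/subsetP => y; rewrite !inE => /eqP h.
rewrite (par_notin h hx) andbT; apply/eqP => hyx; subst y.
by move: (par_edge x); rewrite h e_irr.
Qed.

Lemma card_disj (A B C : {set T}) : A :&: B = set0 -> A :|: B \subset C ->
  #|A| + #|B| <= #|C|.
Proof.
move=> h0 hs; rewrite -cardsUI h0 cards0 addn0; exact: subset_leq_card.
Qed.

Lemma deg_notc x : x \notin c -> deg e x <= kk.
Proof.
move=> hx; rewrite deg_par.
have hxn : x \in NC by rewrite inE.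
have := subset_leq_card (ch_notc hx).
rewrite /kk (cardsD1 x NC) hxn; by rewrite add1n.
Qed.

Lemma tree_bd x : x \notin c ->
  deg e x + deg e (par x) <= (if par x \in c then kk + 3 else kk + 1).
Proof.
move=> hx; set z := par x.
have hxz : x != z by rewrite e_neq // par_edge.
have hA : ch x \subset NC :\ x := ch_notc hx.
case hz: (z \in c).
  rewrite deg_par deg_c //.
  have : #|ch x| + #|tc z| <= kk.
    apply: card_disj.
      apply/setP => y; rewrite !inE; apply/negP => /andP [/eqP h1 /andP [_ /eqP h2]].
      by move: hxz; rewrite -h1 -h2 eqxx.
    apply/subsetP => y; rewrite !inE => /orP [/eqP h|/andP [->//]].
    by rewrite (par_notin h hx).
  by move=> h; rewrite addSn addnS; lia.
rewrite !deg_par.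
have : #|ch x| + #|ch z| <= #|NC :\ z|.
  apply: card_disj.
    apply/setP => y; rewrite !inE; apply/negP => /andP [/eqP h1 /eqP h2].
    by move: hxz; rewrite -h1 -h2 eqxx.
  apply/subsetP => y; rewrite !inE => /orP [/eqP h|/eqP h].
    rewrite (par_notin h hx) andbT; apply/eqP => hyz; subst y.
    by move: (P3 x); rewrite -/z h eqxx.
  rewrite (par_notin h (negbT hz)) andbT; apply/eqP => hyz; subst y.
  by move: (par_edge z); rewrite h e_irr.
have hzn : z \in NC by rewrite inE hz.
rewrite /kk (cardsD1 z NC) hzn => h; lia.
Qed.

Lemma sum_tc : (\sum_(x <- c) #|tc x|)%N <= kk.
Proof.
rewrite big_uniq ?c_uniq //.
rewrite (eq_bigr (fun x => \sum_(y | (y \notin c) && (par y == x)) 1)%N); last first.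
  by move=> x _; rewrite -sum1_card; apply: eq_bigl => y; rewrite inE.
rewrite (exchange_big_dep (fun y => y \notin c)) /=; last by move=> i j _ /andP [].
rewrite /kk -sum1_card.
rewrite [X in (_ <= X)%N](eq_bigl (fun y => y \notin c)); last by move=> y; rewrite inE.
apply: leq_sum => y hy.
rewrite sum1_card.
apply: leq_trans (subset_leq_card (B := pred1 (par y)) _) _; last by rewrite card1.
by apply/subsetP => x; rewrite !inE => /andP [_ /andP [_ /eqP ->]].
Qed.

Lemma S1_of_deg x : kk + 2 <= deg e x -> x \in c /\ forall y, y \notin c -> par y = x.
Proof.
move=> hd.
case hx: (x \in c); last first.
  by have := deg_notc (negbT hx); lia.
split=> // y hy.
move: hd; rewrite deg_c // => hd.
have hsub : tc x \subset NC by apply/subsetP => z; rewrite !inE => /andP [->].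
have : tc x == NC by rewrite eqEcard hsub /= -/kk; lia.
move=> /eqP htc; have : y \in tc x by rewrite htc inE.
by rewrite inE => /andP [_ /eqP].
Qed.

Section Reals.
Variable R : realType.
Local Open Scope ring_scope.

Definition Fs x y : R := Num.sqrt ((deg e x)%:R ^+ 2 + (deg e y)%:R ^+ 2).

Lemma sombor_par : sombor R e = \sum_x Fs x (par x).
Proof.
rewrite /sombor.
rewrite (eq_bigr (fun x => Fs x (par x) + \sum_(y | par y == x) Fs x y)); last first.
  move=> x _; rewrite (bigD1 (par x)) ?par_edge //=; congr (_ + _).
  apply: eq_bigl => y; rewrite e_par.
  case: (eqVneq y (par x)) => [->|hy] /=; first by rewrite (negbTE (P3 x)).
  by rewrite andbT eq_sym.
have E1 : \sum_x (Fs x (par x) + \sum_(y | par y == x) Fs x y) =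
   \sum_x Fs x (par x) + \sum_x \sum_(y | par y == x) Fs x y.
  exact: big_split.
have E2 : \sum_x \sum_(y | par y == x) Fs x y = \sum_y Fs y (par y).
  rewrite (exchange_big_dep xpredT); last by [].
  apply: eq_bigr => y _; rewrite (big_pred1 (par y)); first by rewrite /Fs addrC.
  by move=> x; rewrite /= eq_sym.
rewrite E1 E2.
set S := \sum_x _.
lra.
Qed.


Lemma sombor_split : sombor R e =
  \sum_(x in c) Fs x (next c x) + \sum_(x | x \notin c) Fs x (par x).
Proof.
rewrite sombor_par (bigID (fun x => x \in c)) /=.
congr (_ + _); apply: eq_bigr => x hx; by rewrite par_c.
Qed.

Definition B1 : R := Num.sqrt ((kk + 2)%N%:R ^+ 2 + 1).

Lemma nat_tree (a b k : nat) : (1 <= a -> 1 <= b -> a + b <= k + 3 ->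
  a ^ 2 + b ^ 2 <= (k + 2) ^ 2 + 1)%N.
Proof. move=> ha hb hab; nia. Qed.

Lemma Fs_nat x y : Fs x y = Num.sqrt ((deg e x ^ 2 + deg e y ^ 2)%N%:R).
Proof. by rewrite /Fs natrD !natrX. Qed.

Lemma B1_nat : B1 = Num.sqrt (((kk + 2) ^ 2 + 1)%N%:R).
Proof. by rewrite /B1 [in RHS]natrD natrX mulr1n. Qed.

Lemma tree_term x : x \notin c -> Fs x (par x) <= B1.
Proof.
move=> hx; rewrite Fs_nat B1_nat ler_sqrt // ler_nat.
have := tree_bd hx; rewrite !deg_par => h.
apply: nat_tree => //.
by case: (par x \in c) in h; lia.
Qed.

Lemma tree_sum : \sum_(x | x \notin c) Fs x (par x) <= kk%:R * B1.
Proof.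
apply: le_trans (ler_sum _ (fun x hx => tree_term hx)) _.
rewrite (eq_bigl (fun x => x \in NC)); last by move=> x; rewrite inE.
by rewrite sumr_const mulr_natl.
Qed.

Lemma psi2 : psi 2 = 2 * Num.sqrt 2 :> R.
Proof.
rewrite /psi.
have -> : (2 : R) ^+ 2 + 4 = 2 ^+ 2 * 2 by ring.
by rewrite sqrtrM ?sqr_ge0 // sqrtr_sqr ger0_norm.
Qed.

Lemma sub_mod (a b : R) : 2 <= a -> 2 <= b ->
  Num.sqrt (a ^+ 2 + b ^+ 2) <= psi a + psi b - psi 2.
Proof.
move=> ha hb; rewrite /psi.
suff : Num.sqrt (a ^+ 2 + b ^+ 2) + Num.sqrt (2 ^+ 2 + 4)
   <= Num.sqrt (a ^+ 2 + 4) + Num.sqrt (b ^+ 2 + 4) by lra.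
have ha2 : 4 <= a ^+ 2 by nra.
have hb2 : 4 <= b ^+ 2 by nra.
apply: sqrt_le_sum; try nra.
Qed.

Lemma deg_psi x : x \in c -> psi (deg e x)%:R = psi 2 + phi R #|tc x| :> R.
Proof.
move=> hx; rewrite deg_c // /phi -addn2 natrD addrC; lra.
Qed.

Lemma deg2 x : x \in c -> 2 <= (deg e x)%:R :> R.
Proof. by move=> hx; rewrite deg_c // (ler_nat R 2). Qed.

Lemma cyc_sum : \sum_(x in c) Fs x (next c x) <=
  2 * psi ((kk + 2)%N%:R) + ((size c)%:R - 2) * psi 2.
Proof.
have h1 : \sum_(x in c) Fs x (next c x) <=
   \sum_(x in c) (psi (deg e x)%:R + psi (deg e (next c x))%:R - psi 2).
  apply: ler_sum => x hx; apply: sub_mod; apply: deg2 => //.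
  by rewrite mem_next.
have hinj : injective (next c) := can_inj (prev_next c_uniq).
have h2 : \sum_(x in c) psi (deg e (next c x))%:R = \sum_(x in c) psi (deg e x)%:R :> R.
  rewrite [RHS](reindex_inj hinj); apply: eq_bigl => x; by rewrite mem_next.
have h3 : \sum_(x in c) psi (deg e x)%:R =
    (size c)%:R * psi 2 + \sum_(x in c) phi R #|tc x| :> R.
  rewrite (eq_bigr (fun x => psi 2 + phi R #|tc x|)); last by move=> x hx; rewrite deg_psi.
  by rewrite big_split /= sumr_const (card_uniqP c_uniq) mulr_natl.
have h4 : \sum_(x in c) phi R #|tc x| <= phi R kk.
  rewrite -big_uniq ?c_uniq //; apply: le_trans (phi_sum _ _ _) _.
  apply: phi_mono; exact: sum_tc.
have h5 : \sum_(x in c) (psi (deg e x)%:R + psi (deg e (next c x))%:R - psi 2) =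
    2 * \sum_(x in c) psi (deg e x)%:R - (size c)%:R * psi 2 :> R.
  rewrite sumrB big_split /= h2 sumr_const (card_uniqP c_uniq) mulr_natl; ring.
have h6 : phi R kk = psi ((kk + 2)%N%:R) - psi 2.
  rewrite /phi; congr (psi _ - _); by rewrite natrD addrC.
lra.
Qed.

Lemma kk_eq : kk = (#|T| - size c)%N.
Proof.
have h := cardC (mem c); rewrite (card_uniqP c_uniq) in h.
rewrite /kk -h addKn; apply: eq_card => y; by rewrite !inE.
Qed.

Lemma size_le : (size c <= #|T|)%N.
Proof. by rewrite -(card_uniqP c_uniq) max_card. Qed.

Lemma bound_eq : sombor_bound R #|T| (size c) =
  2 * psi ((kk + 2)%N%:R) + ((size c)%:R - 2) * psi 2 + kk%:R * B1.
Proof.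
rewrite /sombor_bound -kk_eq psi2 /B1 /psi; lra.
Qed.

Lemma main_ineq : sombor R e <= sombor_bound R #|T| (size c).
Proof.
rewrite sombor_split bound_eq.
have := tree_sum; have := cyc_sum; lra.
Qed.

Lemma nat_eq_case (a b k : nat) : (1 <= a -> 1 <= b -> a <= k -> a + b <= k + 3 ->
  a ^ 2 + b ^ 2 = (k + 2) ^ 2 + 1 -> k + 2 <= b)%N.
Proof. move=> *; nia. Qed.

Lemma nat_eq_case2 (a b k : nat) : (1 <= a -> 1 <= b -> a + b <= k + 1 ->
  a ^ 2 + b ^ 2 = (k + 2) ^ 2 + 1 -> False)%N.
Proof. move=> *; nia. Qed.

Lemma eq_S1 : sombor R e = sombor_bound R #|T| (size c) ->
  exists2 s0, s0 \in c & forall y, y \notin c -> par y = s0.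
Proof.
move=> heq.
have Ht : \sum_(x | x \notin c) Fs x (par x) = kk%:R * B1.
  move: heq; rewrite sombor_split bound_eq.
  have := tree_sum; have := cyc_sum; lra.
case: (pickP (fun y => y \notin c)) => [x0 hx0|hnone]; last first.
  have [c0 hc0] := c_ex; exists c0 => // y hy; by rewrite hnone in hy.
have Hz : \sum_(x | x \notin c) (B1 - Fs x (par x)) = 0.
  rewrite sumrB Ht (eq_bigl (fun x => x \in NC)); last by move=> x; rewrite inE.
  by rewrite sumr_const mulr_natl subrr.
have hnn : forall x, x \notin c -> 0 <= B1 - Fs x (par x).
  by move=> x hx; rewrite subr_ge0 tree_term.
move/eqP: (psumr_eq0P hnn Hz hx0).
rewrite subr_eq0 eq_sym Fs_nat B1_nat eqr_sqrt ?ler0n // eqr_nat => /eqP hn.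
have ha : (1 <= deg e x0)%N by rewrite deg_par.
have hb : (1 <= deg e (par x0))%N by rewrite deg_par.
have hbd := tree_bd hx0.
case hp : (par x0 \in c) in hbd; last first.
  by case: (nat_eq_case2 ha hb hbd hn).
have hb2 := nat_eq_case ha hb (deg_notc hx0) hbd hn.
have [hin hall] := S1_of_deg hb2.
by exists (par x0).
Qed.

Lemma S1_eq s0 : s0 \in c -> (forall y, y \notin c -> par y = s0) ->
  sombor R e = sombor_bound R #|T| (size c).
Proof.
move=> hs0 hall.
have dnc : forall y, y \notin c -> deg e y = 1%N.
  move=> y hy; rewrite deg_par.
  suff -> : ch y = set0 by rewrite cards0.
  apply/setP => z; rewrite !inE; apply/negP => /eqP hz.
  case hzc: (z \in c).
    by move: (par_in hzc); rewrite hz (negbTE hy).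
  by move: hs0; rewrite -(hall z (negbT hzc)) hz (negbTE hy).
have ds0 : deg e s0 = (kk + 2)%N.
  rewrite deg_c // -addn2 /kk; congr (_ + _)%N; apply: eq_card => z.
  rewrite !inE; case hz: (z \in c) => //=; by rewrite hall ?hz ?eqxx.
have dc : forall x, x \in c -> x != s0 -> deg e x = 2%N.
  move=> x hx hxs; rewrite deg_c //.
  suff -> : tc x = set0 by rewrite cards0.
  apply/setP => z; rewrite !inE; apply/negP => /andP [hz /eqP hpz].
  by move: hxs; rewrite -hpz hall // eqxx.
have Htree : \sum_(x | x \notin c) Fs x (par x) = kk%:R * B1.
  rewrite (eq_bigr (fun _ => B1)); last first.
    move=> x hx; rewrite /Fs hall // dnc // ds0 /B1 addrC; congr (Num.sqrt (_ + _)).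
    by rewrite expr1n.
  rewrite (eq_bigl (fun x => x \in NC)); last by move=> x; rewrite inE.
  by rewrite sumr_const mulr_natl.
set l := prev c s0.
have hl : l \in c by rewrite mem_prev.
have hns0 : next c s0 != s0 by apply: e_neq; rewrite e_sym next_cycle // c_cycle.
have hls : l != s0.
  by apply: contra hns0 => /eqP hl0; rewrite -{1}hl0 /l next_prev ?c_uniq.
have hnl : next c l = s0 by rewrite next_prev ?c_uniq.
have Hcyc : \sum_(x in c) Fs x (next c x) =
     2 * psi ((kk + 2)%N%:R) + ((size c)%:R - 2) * psi 2.
  rewrite (bigD1 s0) //= (bigD1 l) /=; last by rewrite hl hls.
  rewrite hnl /Fs ds0 (dc l hl hls) (dc (next c s0)) ?mem_next //.
  rewrite (eq_bigr (fun _ => psi 2)); last first.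
    move=> x /andP [/andP [hx hxs] hxl].
    have hnx : next c x != s0.
      apply: contra hxl => /eqP h; by rewrite /l -h prev_next ?c_uniq.
    rewrite (dc x hx hxs) (dc (next c x)) ?mem_next // /psi; congr (Num.sqrt _).
    ring.
  rewrite (eq_bigl (fun x => x \in [pred x | (x \in c) && (x != s0) && (x != l)])); last first.
    by move=> x.
  rewrite sumr_const.
  have hcard : #|[pred x | (x \in c) && (x != s0) && (x != l)]| = (size c - 2)%N.
    rewrite -(card_uniqP c_uniq) (cardD1 s0 (mem c)) (cardD1 l [predD1 (mem c) & s0]).
    rewrite !inE hs0 hl hls /= add1n add1n subn2 /=.
    apply: eq_card => x; rewrite !inE.
    by case: (x \in c); case: (x != s0); case: (x != l).
  rewrite hcard -[psi 2 *+ _]mulr_natl natrB; last by have := c_size; lia.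
  rewrite /psi.
  have -> : (2%:R : R) ^+ 2 = 4 by rewrite -natrX.
  have -> : Num.sqrt (4 + (kk + 2)%:R ^+ 2) = Num.sqrt ((kk + 2)%:R ^+ 2 + 4) :> R.
    by rewrite addrC.
  lra.
rewrite sombor_split Hcyc Htree bound_eq.
lra.
Qed.

End Reals.

Lemma iso_S1 : graph_iso e (Urel #|T| (size c)) ->
  exists2 s0, s0 \in c & forall y, y \notin c -> par y = s0.
Proof.
case=> f [hbij hf].
have hn : 0 < #|T| by have := size_le; have := c_size; lia.
pose z0 : 'I_#|T| := Ordinal hn.
case: (hbij) => fi hK1 hK2.
set x0 := fi z0.
have hdeg : deg e x0 = #|[set j | Urel #|T| (size c) z0 j]|.
  rewrite /deg -(card_imset _ (bij_inj hbij)); apply: eq_card => j.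
  apply/imsetP/idP => [[y hy ->]|hj].
    by rewrite inE -{1}(hK2 z0) hf; rewrite inE in hy.
  exists (fi j); last by rewrite hK2.
  by rewrite inE -hf /x0 !hK2; rewrite inE in hj.
rewrite urel_deg0 ?c_size ?size_le // -kk_eq in hdeg.
have [hx0 hall] := S1_of_deg (x := x0) (eq_leq (esym hdeg)).
by exists x0.
Qed.

Lemma idx_next (s0 : T) (s' : seq T) x : uniq (s0 :: s') -> x \in s0 :: s' ->
  index (next (s0 :: s') x) (s0 :: s') = (index x (s0 :: s')).+1 %% size (s0 :: s').
Proof.
move=> hu hx; rewrite next_nth hx.
have hi : index x (s0 :: s') < (size s').+1 by rewrite -[(size s').+1]/(size (s0 :: s')) index_mem.
case: (ltnP (index x (s0 :: s')) (size s')) => h.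
  have -> : nth s0 s' (index x (s0 :: s')) = nth s0 (s0 :: s') (index x (s0 :: s')).+1 by [].
  rewrite index_uniq //= ?modn_small //.
have -> : index x (s0 :: s') = size s' by apply/eqP; rewrite eqn_leq h -ltnS hi.
by rewrite nth_default //= eqxx modnn.
Qed.

Lemma S1_iso s0 : s0 \in c -> (forall y, y \notin c -> par y = s0) ->
  graph_iso e (Urel #|T| (size c)).
Proof.
move=> hs0 hall.
have [i s' hrot] := rot_to hs0.
set cc := s0 :: s'.
have ucc : uniq cc by rewrite /cc -hrot rot_uniq c_uniq.
have mcc : cc =i c by move=> x; rewrite /cc -hrot mem_rot.
have scc : size cc = size c by rewrite /cc -hrot size_rot.
have ncc : forall x, next cc x = next c x by move=> x; rewrite /cc -hrot (next_rot i c_uniq).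
set E := enum (mem NC).
have sE : size E = kk by rewrite /kk cardE.
have mE : forall y, (y \in E) = (y \notin c) by move=> y; rewrite mem_enum inE.
have hTn : (size c + kk)%N = #|T| by rewrite kk_eq subnKC ?size_le.
pose f0 x := if x \in c then index x cc else (size c + index x E)%N.
have ilt : forall u, u \in c -> index u cc < size c.
  by move=> u hu; rewrite -scc index_mem mcc.
have fP : forall x, f0 x < #|T|.
  move=> x; rewrite /f0; case: ifP => hx.
    by rewrite -hTn; apply: leq_trans (ilt x hx) (leq_addr _ _).
  by rewrite -hTn ltn_add2l -sE index_mem mE hx.
pose f x := Ordinal (fP x).
have ieq : forall u v, u \in c -> v \in c -> (index u cc == index v cc) = (u == v).
  move=> u v hu hv; apply/eqP/eqP => [|-> //]; apply: (@index_inj _ u); by rewrite mcc.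
have g3 := c_size.
exists f; split.
  apply: inj_card_bij; last by rewrite card_ord.
  move=> x y /(congr1 val) /=; rewrite /f0.
  case: ifP => hx; case: ifP => hy.
  - by move/eqP; rewrite ieq // => /eqP.
  - by move=> h; have := ilt x hx; rewrite h; lia.
  - by move=> h; have := ilt y hy; rewrite -h; lia.
  - move/addnI => h; apply: (@index_inj _ x E); by rewrite ?mE ?hx ?hy.
move=> x y; rewrite /Urel /= /f0 e_par.
have A1 : forall a, (size c + a < size c) = false by move=> a; rewrite ltnNge leq_addr.
have A2 : forall a, (size c + a == 0) = false by move=> a; apply/eqP; lia.
have A3 : forall a, (size c <= size c + a) = true by move=> a; rewrite leq_addr.
have A4 : forall u, u \in c -> (size c <= index u cc) = false.
  by move=> u hu; rewrite leqNgt ilt.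
have I0 : forall u, (index u cc == 0) = (u == s0).
  by move=> u; rewrite /cc /= (eq_sym u); case: (s0 == u).
have hsc : forall u, u \notin c -> (u == s0) = false.
  by move=> u hu; apply/eqP => h; move: hs0; rewrite -h (negbTE hu).
case hx: (x \in c); case hy: (y \in c).
- rewrite !ilt // !A4 // andbF andbF orbF orbF !andTb.
  have hidx : forall u, u \in c -> index (next c u) cc = (index u cc).+1 %% size c.
    by move=> u hu; rewrite -ncc idx_next ?mcc // scc.
  rewrite -!hidx //.
  by rewrite !ieq ?mem_next // !par_c.
- rewrite A1 andFb andbF orFb A3 andbT A2 andFb orbF I0 (hall y) ?hy //.
  have -> : (y == par x) = false.
    by apply/eqP => h; move: (par_in hx); rewrite -h hy.
  by [].
- rewrite A1 andFb orFb A2 andFb orFb A3 andbT I0 (hall x) ?hx //.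
  have -> : (x == par y) = false.
    by apply/eqP => h; move: (par_in hy); rewrite -h hx.
  by rewrite orbF.
- rewrite A1 andFb orFb A2 andFb orFb A2 andFb (hall x) ?hx // (hall y) ?hy //.
  by rewrite !hsc ?hx ?hy.
Qed.

End Graph.


Local Open Scope ring_scope.

Theorem theorem3p4 (R : realType) (T : finType) (e : rel T)
  (e_sym : symmetric e) (e_irr : irreflexive e) (c : seq T)
  (hU : unicyclic_with_cycle e c) :
  sombor R e <= sombor_bound R #|T| (size c) /\
  (sombor R e = sombor_bound R #|T| (size c) <->
   graph_iso e (Urel #|T| (size c))).
Proof.
split; first exact: (main_ineq e_sym e_irr hU R).
split.
  move/(eq_S1 e_sym e_irr hU) => [s0 hs0 hall].
  exact: (S1_iso e_sym e_irr hs0 hall).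
move/(iso_S1 e_sym e_irr hU) => [s0 hs0 hall].
exact: (S1_eq e_sym e_irr R hs0 hall).
Qed.
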